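(* For every digraph $X$ on vertex set $V$, $u_X(-m)=(-1)^{|V|}u_{\overline{X}}(m)$ as polynomials in $m$.
   Context: A digraph $X=(V,E)$: $V$ finite, $E\subset\{(u,v)\in V\times V\mid u\ne v\}$; $\overline{X}=(V,E^c)$ with $(u,v)\in E^c$ iff $u\ne v$, $(u,v)\notin E$. $\Sigma_V$ is the set of bijections $\sigma:[n]\to V$ ($n=|V|$), $X\mathrm{Des}(\sigma)=\{i\in[n-1]\mid(\sigma_i,\sigma_{i+1})\in E\}$; $F_I=\sum x_{i_1}\cdots x_{i_n}$ over $1\le i_1\le\cdots\le i_n$ with $i_j<i_{j+1}$ for $j\in I$; $U_X=\sum_{\sigma\in\Sigma_V}F_{X\mathrm{Des}(\sigma)}$; the Redei–Berge polynomial $u_X(m)$ is the polynomial in $m$ given by $U_X(1,\dots,1,0,\dots)$ with $m$ ones. *)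

(* Defs.v *)
From mathcomp Require Import all_boot all_order all_algebra.
Set Implicit Arguments. Unset Strict Implicit. Unset Printing Implicit Defensive.
Import GRing.Theory Num.Theory.

Definition compl_rel (V : eqType) (E : rel V) : rel V :=
  [rel u v | (u != v) && ~~ E u v].

(* X-descent set of sigma : [n] -> V, 0-indexed: i is a descent iff
   i+1 < n and (sigma_i, sigma_{i+1}) is an arc. *)
Definition XDes (V : finType) (E : rel V) (n : nat) (s : {ffun 'I_n -> V})
  (i : 'I_n) : bool :=
  [exists j : 'I_n, (val j == i.+1) && E (s i) (s j)].

(* F_I evaluated at (1,...,1,0,0,...) with m ones: the number of sequences
   1 <= i_1 <= ... <= i_n <= m (values encoded in 'I_m) with i_j < i_{j+1}
   whenever j is in I. *)
Definition F_spec (n m : nat) (I : pred 'I_n) : nat :=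
  #|[set f : {ffun 'I_n -> 'I_m} |
      [forall i : 'I_n, forall j : 'I_n, (val j == i.+1) ==>
         (if I i then f i < f j else f i <= f j)]]|.

(* U_X(1^m) = sum over bijections sigma : [n] -> V of F_{XDes sigma}(1^m). *)
Definition U_spec (V : finType) (E : rel V) (m : nat) : nat :=
  \sum_(s : {ffun 'I_#|V| -> V} | injectiveb s) F_spec m (XDes E s).

(* Main.v *)
Require Import Defs.
From mathcomp Require Import all_boot all_order all_algebra.
From mathcomp Require Import zify ring.
Import GRing.Theory Num.Theory.
Set Implicit Arguments. Unset Strict Implicit. Unset Printing Implicit Defensive.

Lemma card_sum (T : finType) (P : pred T) : #|P| = (\sum_(i : T) (P i : nat))%N.
Proof.
rewrite -sum1_card big_mkcond /=; apply: eq_bigr => i _; rewrite unfold_in; by case: (P i).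
Qed.

Lemma mono_adj (n : nat) (h : nat -> nat) :
  (forall l, l.+1 < n -> h l <= h l.+1) -> forall i j, i <= j -> j < n -> h i <= h j.
Proof.
move=> H i; elim=> [|j IH] hij hj.
  by rewrite leqn0 in hij; rewrite (eqP hij).
rewrite leq_eqVlt in hij; case/orP: hij => [/eqP -> //|hij].
apply: leq_trans (IH hij (ltnW hj)) (H _ hj).
Qed.

Lemma adj_nat n' (R : 'I_n'.+1 -> 'I_n'.+1 -> bool) :
  reflect (forall l, l < n' -> R (inord l) (inord l.+1))
          [forall i : 'I_n'.+1, forall j : 'I_n'.+1, (val j == i.+1) ==> R i j].
Proof.
apply: (iffP forallP) => H.
  move=> l hl; have := forallP (H (inord l)) (inord l.+1).
  have h1 : nat_of_ord (inord l.+1 : 'I_n'.+1) = l.+1 by rewrite inordK.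
  have h2 : nat_of_ord (inord l : 'I_n'.+1) = l by rewrite inordK // ltnW.
  by rewrite /= h1 h2 eqxx.
move=> i; apply/forallP => j; apply/implyP => /eqP hj.
have hi : i < n' by rewrite -ltnS -hj ltn_ord.
have := H _ hi; rewrite inord_val.
by have -> : inord i.+1 = j by apply: val_inj; rewrite /= inordK -hj ?ltn_ord.
Qed.

Lemma sorted_mk n M (g : 'I_n -> 'I_M) :
  sorted ltn [seq val i | i <- mktuple g] =
  [forall i : 'I_n, forall j : 'I_n, (val j == i.+1) ==> (g i < g j)].
Proof.
apply/(sortedP 0)/forallP => [H i|H l].
  apply/forallP => j; apply/implyP => /eqP hj.
  have hl : i.+1 < n by rewrite -hj ltn_ord.
  have := H i; rewrite size_map size_tuple => /(_ hl); rewrite (nth_map (g i)) ?size_tuple // (nth_map (g i)) ?size_tuple //.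
  rewrite -hj (nth_mktuple _ _ i) (nth_mktuple _ _ j); move=> h; exact h.
rewrite size_map size_tuple => hl; have hl' : l < n by apply: ltnW.
rewrite (nth_map (g (Ordinal hl'))) ?size_tuple // (nth_map (g (Ordinal hl'))) ?size_tuple //.
have := forallP (H (Ordinal hl')) (Ordinal hl); rewrite eqxx /=.
by rewrite (nth_mktuple _ _ (Ordinal hl')) (nth_mktuple _ _ (Ordinal hl)) => h; exact h.
Qed.

Lemma count_strict (n M : nat) :
  #|[set g : {ffun 'I_n -> 'I_M} | [forall i : 'I_n, forall j : 'I_n, (val j == i.+1) ==> (g i < g j)]]|
  = 'C(M, n).
Proof.
rewrite -card_ltn_sorted_tuples.
have inj : injective (fun g : {ffun 'I_n -> 'I_M} => [tuple g i | i < n]).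
  move=> g1 g2 h; apply/ffunP => i.
  by rewrite -(tnth_mktuple g1) -(tnth_mktuple g2) h.
rewrite -(card_imset _ inj); apply: eq_card => t.
apply/imsetP/idP => [[g]|]; first by rewrite !inE -sorted_mk => hg ->.
rewrite inE => ht; exists [ffun i => tnth t i].
  rewrite inE -sorted_mk.
  suff -> : [tuple [ffun i => tnth t i] i | i < n] = t by [].
  by apply: eq_from_tnth => i; rewrite tnth_mktuple ffunE.
by apply: eq_from_tnth => i; rewrite tnth_mktuple ffunE.
Qed.

Section Count.
Variables (n' m' : nat) (I : pred 'I_n'.+1).
Hypothesis hI : forall i, I i -> i.+1 < n'.+1.

Let c l := (\sum_(0 <= j < l) (~~ I (inord j) : nat))%N.
Let N := n' - #|I|.

Lemma c_S l : c l.+1 = c l + ~~ I (inord l).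
Proof. by rewrite /c big_nat_recr. Qed.

Lemma c0 : c 0 = 0.
Proof. by rewrite /c big_geq. Qed.

Lemma c_mono i j : i <= j -> c i <= c j.
Proof. by move=> hij; rewrite /c (@big_cat_nat _ _ _ i 0 j _ _ (leq0n i) hij) leq_addr. Qed.

Lemma c_last : c n' = N.
Proof.
have hk : #|I| = \sum_(0 <= l < n'.+1) (I (inord l) : nat).
  rewrite card_sum big_mkord; apply: eq_bigr => i _; by rewrite inord_val.
have hlast : I (inord n') = false.
  apply/negP => h; have := hI h; by rewrite inordK // ltnn.
rewrite big_nat_recr //= hlast addn0 in hk.
have : c n' + #|I| = n'.
  rewrite hk /c -big_split /=.
  under eq_bigr do rewrite addn_negb.
  by rewrite sum_nat_const_nat muln1 subn0.
rewrite /N; lia.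
Qed.

Definition Aset := [set f : {ffun 'I_n'.+1 -> 'I_m'.+1} |
      [forall i : 'I_n'.+1, forall j : 'I_n'.+1, (val j == i.+1) ==>
         (if I i then f i < f j else f i <= f j)]].
Definition Bset := [set g : {ffun 'I_n'.+1 -> 'I_(m' + N).+1} |
   [forall i : 'I_n'.+1, forall j : 'I_n'.+1, (val j == i.+1) ==> (g i < g j)]].

Definition phi (f : {ffun 'I_n'.+1 -> 'I_m'.+1}) : {ffun 'I_n'.+1 -> 'I_(m' + N).+1} :=
  [ffun i => inord (f i + c i)].
Definition psi (g : {ffun 'I_n'.+1 -> 'I_(m' + N).+1}) : {ffun 'I_n'.+1 -> 'I_m'.+1} :=
  [ffun i => inord (g i - c i)].

Lemma phi_val f i : nat_of_ord (phi f i) = f i + c i.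
Proof.
rewrite ffunE inordK //.
have h1 := ltn_ord (f i); have h2 : c i <= N.
  by rewrite -c_last c_mono // -ltnS.
lia.
Qed.

Lemma psi_phi f : psi (phi f) = f.
Proof.
apply/ffunP => i; apply: val_inj => /=.
rewrite ffunE phi_val addnK inordK //.
Qed.

Lemma ordS l : l < n' -> nat_of_ord (inord l.+1 : 'I_n'.+1) = l.+1.
Proof. by move=> hl; rewrite inordK. Qed.
Lemma ord0' l : l < n' -> nat_of_ord (inord l : 'I_n'.+1) = l.
Proof. by move=> hl; rewrite inordK // ltnW. Qed.

Lemma phi_B f : f \in Aset -> phi f \in Bset.
Proof.
rewrite !inE => /adj_nat hf; apply/adj_nat => l hl.
rewrite !phi_val (ordS hl) (ord0' hl) c_S.
have := hf l hl; case: (I (inord l)) => /=; lia.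
Qed.

Section G.
Variable g : {ffun 'I_n'.+1 -> 'I_(m' + N).+1}.
Hypothesis hg : g \in Bset.

Lemma Bfacts l : l <= n' ->
  c l <= g (inord l) /\ g (inord l) - c l <= m'.
Proof.
move: hg; rewrite inE => /adj_nat hB.
have P1 : forall l, l <= n' -> c l <= g (inord l).
  elim=> [|j IH] hj; first by rewrite c0.
  have hj' : j < n' by [].
  have := hB j hj'; have := IH (ltnW hj'); rewrite c_S.
  case: (I (inord j)) => /=; lia.
move=> hl; split; first exact: P1.
have := @mono_adj n'.+1 (fun l => g (inord l) - c l).
move=> /(_ _ l n' hl (leqnn _)) H.
have : g (inord n') - c n' <= m'.
  rewrite c_last; have := ltn_ord (g (inord n')); lia.
apply: leq_trans; apply: H => j hj.
have hj' : j < n' by [].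
have := hB j hj'; have := P1 j (ltnW hj'); rewrite c_S.
case: (I (inord j)) => /=; lia.
Qed.

Lemma Bfacts' (i : 'I_n'.+1) : c i <= g i /\ g i - c i <= m'.
Proof. by have := Bfacts (ltn_ord i : i <= n'); rewrite inord_val. Qed.

Lemma psi_val i : nat_of_ord (psi g i) = g i - c i.
Proof. by rewrite ffunE inordK // ltnS; case: (Bfacts' i). Qed.

Lemma phi_psi : phi (psi g) = g.
Proof.
apply/ffunP => i; apply: val_inj => /=.
by rewrite phi_val psi_val subnK ?inord_val //; case: (Bfacts' i).
Qed.

Lemma psi_A : psi g \in Aset.
Proof.
rewrite inE; apply/adj_nat => l hl.
rewrite !psi_val (ordS hl) (ord0' hl) c_S.
have := Bfacts (ltnW hl); have := Bfacts hl.
move: hg; rewrite inE => /adj_nat /(_ l hl).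
case: (I (inord l)) => /=; lia.
Qed.
End G.

Lemma count_A : #|Aset| = 'C((m' + N).+1, n'.+1).
Proof.
rewrite -count_strict -(card_imset _ (can_inj psi_phi)).
apply: eq_card => g; apply/imsetP/idP => [[f hf ->]|hg].
  exact: phi_B.
by exists (psi g); [exact: psi_A | rewrite phi_psi].
Qed.

End Count.

Lemma F_formula n m (I : pred 'I_n) (hI : forall i, I i -> i.+1 < n) :
  F_spec m I = 'C(m + (n.-1 - #|I|), n).
Proof.
case: n I hI => [|n'] I hI.
  rewrite /F_spec bin0.
  transitivity #|{ffun 'I_0 -> 'I_m}|; last by rewrite card_ffun !card_ord expn0.
  rewrite -cardsT; congr #|pred_of_set _|; apply/setP => f; rewrite !inE.
  by apply/forallP => -[].
case: m => [|m'].
  have := max_card (mem [set f : {ffun 'I_n'.+1 -> 'I_0} |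
      [forall i : 'I_n'.+1, forall j : 'I_n'.+1, (val j == i.+1) ==>
         (if I i then f i < f j else f i <= f j)]]).
  rewrite card_ffun !card_ord exp0n // leqn0 => /eqP.
  rewrite /F_spec => ->; rewrite bin_small //; lia.
by rewrite addSn -(@count_A n' m' I hI).
Qed.

Lemma XDes_in (V : finType) (E : rel V) n (s : {ffun 'I_n -> V}) i :
  XDes E s i -> i.+1 < n.
Proof. case/existsP => j /andP[/eqP hj _]; have := ltn_ord j; by rewrite hj. Qed.

Lemma XDes_split (V : finType) (E : rel V) n (s : {ffun 'I_n -> V}) :
  injective s -> #|XDes E s| + #|XDes (compl_rel E) s| = n.-1.
Proof.
move=> inj; rewrite !card_sum -big_split /=.
have H : forall i : 'I_n, (XDes E s i : nat) + XDes (compl_rel E) s i = (i.+1 < n).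
  move=> i; case: (ltnP i.+1 n) => h.
    have e : forall R : 'I_n -> bool,
        [exists j : 'I_n, (val j == i.+1) && R j] = R (Ordinal h).
      move=> R; apply/existsP/idP => [[j /andP[/eqP hj hR]]|hR].
        by have -> : Ordinal h = j by apply: val_inj.
      by exists (Ordinal h); rewrite /= eqxx.
    rewrite /XDes !e /compl_rel /=.
    have -> : s i != s (Ordinal h).
      apply/negP => /eqP /inj /(congr1 val) /= hh; move: hh; lia.
    by case: (E _ _).
  have e : forall R : 'I_n -> bool,
      [exists j : 'I_n, (val j == i.+1) && R j] = false.
    move=> R; apply/existsP => -[j /andP[/eqP hj _]].
    have := ltn_ord j; rewrite hj; lia.
  by rewrite /XDes !e.
rewrite (eq_bigr _ (fun i _ => H i)).
case: n s inj {H} => [|n] s inj; first by rewrite big_ord0.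
rewrite big_ord_recr /= ltnn addn0.
rewrite (eq_bigr (fun _ => 1)) => [|i _]; last by rewrite /= ltnS ltn_ord.
by rewrite sum1_card card_ord.
Qed.


Local Open Scope ring_scope.

Definition Pn (n a : nat) : {poly rat} :=
  (n`!%:R)^-1 *: \prod_(j < n) ('X + (a%:R - j%:R)%:P).

Lemma prod_ffact (N n : nat) : \prod_(j < n) (N%:R - j%:R : rat) = (N ^_ n)%:R.
Proof.
elim: n => [|n IH]; first by rewrite big_ord0 ffactn0.
rewrite big_ord_recr /= IH ffactnSr natrM.
case: (leqP n N) => h; first by rewrite natrB.
by rewrite ffact_small // !mul0r.
Qed.

Lemma Pn_eval n a m : (Pn n a).[m%:R] = ('C(m + a, n))%:R.
Proof.
rewrite /Pn hornerZ horner_prod.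
under eq_bigr => j _ do rewrite hornerD hornerX hornerC addrA -natrD.
rewrite prod_ffact -bin_ffact natrM mulrC -mulrA mulfV ?mulr1 //.
by rewrite pnatr_eq0 -lt0n fact_gt0.
Qed.

Lemma Pn_recip n a b : (a + b = n.-1)%N -> Pn n a \Po (- 'X) = (-1) ^+ n *: Pn n b.
Proof.
case: n => [|n] /= hab.
  by rewrite /Pn !big_ord0 expr0 scale1r comp_polyZ -polyC1 comp_polyC.
rewrite /Pn comp_polyZ scalerA mulrC -scalerA; congr (_ *: _).
rewrite rmorph_prod /=.
under eq_bigr => j _ do rewrite comp_polyD comp_polyX comp_polyC
   -[_ + _]opprK opprD opprK -polyCN.
rewrite prodrN card_ord -mul_polyC rmorphXn rmorphN rmorph1; congr (_ * _).
rewrite (reindex_inj rev_ord_inj) /=; apply: eq_bigr => j _.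
congr (_ + _%:P).
have hj : (j <= n)%N by rewrite -ltnS.
rewrite subSS natrB // -{1}hab natrD; ring.
Qed.

Unset Implicit Arguments.


Theorem mainTheorem15 (V : finType) (E : rel V) (hE : irreflexive E) :
  exists p q : {poly rat},
    (forall m : nat, p.[m%:R] = (U_spec E m)%:R) /\
    (forall m : nat, q.[m%:R] = (U_spec (compl_rel E) m)%:R) /\
    p \Po (- 'X) = ((-1) ^+ #|V|) *: q.
Proof.
pose n := #|V|.
exists (\sum_(s : {ffun 'I_n -> V} | injectiveb s) Pn n (n.-1 - #|XDes E s|)).
exists (\sum_(s : {ffun 'I_n -> V} | injectiveb s)
          Pn n (n.-1 - #|XDes (compl_rel E) s|)).
split; [|split].
- move=> m; rewrite horner_sum /U_spec natr_sum; apply: eq_bigr => s _.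
  by rewrite Pn_eval F_formula // => i; apply: XDes_in.
- move=> m; rewrite horner_sum /U_spec natr_sum; apply: eq_bigr => s _.
  by rewrite Pn_eval F_formula // => i; apply: XDes_in.
- rewrite rmorph_sum /= scaler_sumr; apply: eq_bigr => s /injectiveP inj.
  apply: Pn_recip; have := XDes_split E inj; rewrite -/n; lia.
Qed.
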